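(* Fix an integer $n\ge 0$ and $\mathbb K\in\{\mathbb R,\mathbb C\}$. Let $\mathcal B^0\supset\mathcal B^1\supset\cdots\supset\mathcal B^{n+1}$ be linear subspaces and let $\mathcal L=\mathcal L_0,\dots,\mathcal L_n$, $\mathcal L(\epsilon,\cdot)$ ($\epsilon\in(0,1)$) be linear operators satisfying conditions (I), (II), (IV) of the context. Assume also: (a) each $\mathcal B^k$ is a Banach space; (b) $\nu$ is a bounded linear functional on $\mathcal B^0$; $\mathcal L_j$ is bounded $\mathcal B^i\to\mathcal B^{i-j}$ and $\sup_{\epsilon}\|\tilde{\mathcal L}_j(\epsilon,\cdot)\|_{\mathcal B^i\to\mathcal B^{i-j}}<+\infty$ for $j=0,\dots,n$ and $i=j,\dots,n+1$; $\sup_\epsilon\|g(\epsilon,\cdot)\|_{\mathcal B^i}<+\infty$ for $i=0,\dots,n+1$; $\mathcal R_\lambda$ is bounded $\mathcal B^1\to\mathcal B^0$ and bounded on $\mathcal B^i$ for $i=1,\dots,n+1$; and $\mathcal R_\lambda:\mathcal B^1\to\mathcal B^0$ is weak bounded; (c) $\lim_{\epsilon\to0}\|\tilde{\mathcal L}_j(\epsilon,\cdot)\|_{\mathcal B^{i+1}\to\mathcal B^{i-j}}=0$ for each $j=0,\dots,n$ and $i=j,\dots,n$. Then $\|\tilde g_n(\epsilon,\cdot)\|_{\mathcal B^0}\to0$ as $\epsilon\to0$. In particular, $\|\tilde g_k(\epsilon,\cdot)\|_{\mathcal B^i}\to0$ for $k,i\ge0$ with $k+i\le n$, and $\sup_{\epsilon}\|\tilde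 g_k(\epsilon,\cdot)\|_{\mathcal B^{n+1-k}}<\infty$ for $k=0,\dots,n$.
   Context: Conditions. (I) For each $j=0,\dots,n$ and $i=j,\dots,n$, $\mathcal L_j$ maps $\mathcal B^i$ linearly into $\mathcal B^{i-j}$. (II) $\mathcal L:\mathcal B^0\to\mathcal B^0$ decomposes as $\mathcal L=\lambda(h\otimes\nu)+\mathcal R$ with $(\lambda,h,\nu)\in\mathbb K\times\mathcal B^{n+1}\times(\mathcal B^0)^*$ ($(\mathcal B^0)^*$ = linear functionals), $\lambda\neq0$, $\nu\circ\mathcal L=\lambda\nu$, $\mathcal Lh=\lambda h$, $\nu(h)=1$, where $(h\otimes\nu)f=\nu(f)h$; and there is a linear subspace $\mathcal D^0$ with $\mathcal B^1\subset\mathcal D^0\subset\mathcal B^0$ such that every $f\in\mathcal D^0$ has exactly one $g\in\mathcal B^0$ with $(\mathcal R-\lambda\mathcal I)g=f$; this inverse $\mathcal R_\lambda:\mathcal D^0\to\mathcal B^0$ satisfies $\mathcal R_\lambda\mathcal B^i\subset\mathcal B^i$ for $1\le i\le n+1$. (IV) For each $\epsilon\in(0,1)$, $\mathcal L(\epsilon,\cdot)$ maps $\mathcal B^{n+1}$ into $\mathcal B^0$ and there are $\lambda(\epsilon)\in\mathbb K$, $h(\epsilon,\cdot)\in\mathcal B^{n+1}$ with $\mathcal L(\epsilon,h(\epsilon,\cdot))=\lambda(\epsilon)h(\epsilon,\cdot)$ and $\nu(h(\epsilon,\cdot))\ne0$. Notation. $\tilde{\mathcal L}_j(\epsilon,\cdot):=(\mathcal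 L(\epsilon,\cdot)-\mathcal L-\sum_{i=1}^j\mathcal L_i\epsilon^i)/\epsilon^j$; $\mathcal P=h\otimes\nu$; $\mathcal S:=\mathcal R_\lambda(\mathcal I-\mathcal P)$; $g(\epsilon,\cdot):=h(\epsilon,\cdot)/\nu(h(\epsilon,\cdot))$. Coefficients: $g_0=h$ and recursively $\lambda_k=\sum_{j=1}^k\nu(\mathcal L_jg_{k-j})$, $g_k=\sum_{j=1}^k\mathcal S(\lambda_j\mathcal I-\mathcal L_j)g_{k-j}$ for $k=1,\dots,n$. Remainders: $\tilde g_k(\epsilon,\cdot):=(g(\epsilon,\cdot)-\sum_{i=0}^k g_i\epsilon^i)/\epsilon^k$ for $0\le k\le n$. An operator $\mathcal A:\mathcal B^1\to\mathcal B^0$ is weak bounded if for every $\eta>0$ there is $c(\eta)>0$ with $\|\mathcal Af\|_{\mathcal B^0}\le c(\eta)\|f\|_{\mathcal B^0}+\eta\|f\|_{\mathcal B^1}$ for all $f\in\mathcal B^1$. *)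

(* Defs.v *)
From Stdlib Require Export Reals.
From mathcomp Require Import all_boot all_order all_algebra.
From mathcomp Require Export Rstruct complex.

Set Implicit Arguments.
Unset Strict Implicit.
Unset Printing Implicit Defensive.

Import Order.TTheory GRing.Theory Num.Theory.
Local Open Scope ring_scope.

Section Defs.
Variables (K : numFieldType) (V : lmodType K).

Definition subspace (A : V -> Prop) : Prop :=
  A 0 /\ (forall (a : K) x y, A x -> A y -> A (a *: x + y)).

(* N is a norm on the subspace A (values are nonnegative, hence real, in K). *)
Definition is_norm_on (A : V -> Prop) (N : V -> K) : Prop :=
  [/\ (forall x, A x -> 0 <= N x),
      (forall x, A x -> N x = 0 -> x = 0),
      (forall x y, A x -> A y -> N (x + y) <= N x + N y) &
      (forall (a : K) x, A x -> N (a *: x) = `|a| * N x)].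

Definition complete_on (A : V -> Prop) (N : V -> K) : Prop :=
  forall u : nat -> V, (forall m, A (u m)) ->
    (forall e : K, 0 < e -> exists m0 : nat, forall p q : nat, (m0 <= p)%N -> (m0 <= q)%N ->
        N (u p - u q) < e) ->
    exists x, A x /\
      (forall e : K, 0 < e -> exists m0 : nat, forall p : nat, (m0 <= p)%N -> N (u p - x) < e).

Definition banach_on (A : V -> Prop) (N : V -> K) : Prop :=
  [/\ subspace A, is_norm_on A N & complete_on A N].

Definition linear_on (A : V -> Prop) (f : V -> V) : Prop :=
  forall (a : K) x y, A x -> A y -> f (a *: x + y) = a *: f x + f y.

Definition bounded_op (A B : V -> Prop) (NA NB : V -> K) (f : V -> V) : Prop :=
  exists M : K, forall x, A x -> B (f x) /\ NB (f x) <= M * NA x.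

Definition Ltilde (L : nat -> V -> V) (Leps : K -> V -> V) (j : nat) (eps : K)
  (x : V) : V :=
  eps ^- j *: (Leps eps x - L 0%N x - \sum_(1 <= i < j.+1) eps ^+ i *: L i x).

(* S = R_lambda (I - P), P = h (x) nu *)
Definition Sop (Rl : V -> V) (h : V) (nu : V -> K) : V -> V :=
  fun x => Rl (x - nu x *: h).

(* The list [:: (lambda_0, g_0); ...; (lambda_m, g_m)] of coefficients, with
   g_0 = h, lambda_0 := lambda (unused), and recursively
   lambda_k = sum_{j=1}^k nu (L_j g_{k-j}),
   g_k = sum_{j=1}^k S (lambda_j I - L_j) g_{k-j}. *)
Fixpoint coefs (L : nat -> V -> V) (S : V -> V) (lam : K) (h : V)
  (nu : V -> K) (m : nat) : seq (K * V) :=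
  match m with
  | 0%N => [:: (lam, h)]
  | m'.+1 =>
      let s := coefs L S lam h nu m' in
      let k := m'.+1 in
      let lk := \sum_(1 <= j < k.+1) nu (L j (nth (0, 0) s (k - j)%N).2) in
      let s' := rcons s (lk, 0) in
      let gk := \sum_(1 <= j < k.+1)
          S ((nth (0, 0) s' j).1 *: (nth (0, 0) s (k - j)%N).2
             - L j (nth (0, 0) s (k - j)%N).2) in
      rcons s (lk, gk)
  end.

Definition lamk L S lam h nu (k : nat) : K := (nth (0, 0) (coefs L S lam h nu k) k).1.
Definition gk L S lam h nu (k : nat) : V := (nth (0, 0) (coefs L S lam h nu k) k).2.

Definition geps (nu : V -> K) (heps : K -> V) (eps : K) : V :=
  (nu (heps eps))^-1 *: heps eps.

Definition gtilde L S lam h nu heps (k : nat) (eps : K) : V :=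
  eps ^- k *: (geps nu heps eps - \sum_(0 <= i < k.+1) eps ^+ i *: gk L S lam h nu i).

End Defs.

Local Notation in01 eps := (0 < eps /\ eps < 1).

(* The statement of Theorem 6 for a fixed scalar field K. Parameters in (0,1)
   are elements eps of K with 0 < eps < 1 (for K = C this forces eps real). *)
Definition theorem6_for (K : numFieldType) : Prop :=
  forall (V : lmodType K) (n : nat)
    (B : nat -> V -> Prop) (N : nat -> V -> K)
    (L : nat -> V -> V)
    (Leps : K -> V -> V)
    (lam : K) (h : V) (nu : V -> K)
    (D0 : V -> Prop) (Rl : V -> V)
    (lameps : K -> K) (heps : K -> V),
  (forall x, B 0%N x) ->
  (forall i, (i <= n)%N -> forall x, B i.+1 x -> B i x) ->
  (forall i, (i <= n.+1)%N -> banach_on (B i) (N i)) ->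
  (forall j, (j <= n)%N -> linear_on (B j) (L j)) ->
  (forall j i, (j <= i <= n)%N -> forall x, B i x -> B (i - j)%N (L j x)) ->
  lam != 0 ->
  B n.+1 h ->
  (forall (a : K) x y, nu (a *: x + y) = a * nu x + nu y) ->
  (forall f, nu (L 0%N f) = lam * nu f) ->
  L 0%N h = lam *: h ->
  nu h = 1 ->
  subspace D0 ->
  (forall x, B 1%N x -> D0 x) ->
  (* R = L - lam (h (x) nu); Rl is the inverse of (R - lam I) on D0, which is unique *)
  (forall f, D0 f -> L 0%N (Rl f) - (lam * nu (Rl f)) *: h - lam *: Rl f = f) ->
  (forall f, D0 f -> forall g1 g2,
      L 0%N g1 - (lam * nu g1) *: h - lam *: g1 = f ->
      L 0%N g2 - (lam * nu g2) *: h - lam *: g2 = f -> g1 = g2) ->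
  (forall i, (1 <= i <= n.+1)%N -> forall x, B i x -> B i (Rl x)) ->
  (forall eps, in01 eps -> linear_on (fun _ => True) (Leps eps)) ->
  (forall eps, in01 eps ->
     [/\ B n.+1 (heps eps), Leps eps (heps eps) = lameps eps *: heps eps
       & nu (heps eps) != 0]) ->
  (exists M : K, forall f, `|nu f| <= M * N 0%N f) ->
  (forall j i, (j <= n)%N -> (j <= i <= n.+1)%N ->
     bounded_op (B i) (B (i - j)%N) (N i) (N (i - j)%N) (L j)) ->
  (forall j i, (j <= n)%N -> (j <= i <= n.+1)%N ->
     exists M : K, forall eps, in01 eps ->
       forall x, B i x -> B (i - j)%N (Ltilde L Leps j eps x) /\
                 N (i - j)%N (Ltilde L Leps j eps x) <= M * N i x) ->
  (forall i, (i <= n.+1)%N ->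
     exists M : K, forall eps, in01 eps -> N i (geps nu heps eps) <= M) ->
  bounded_op (B 1%N) (B 0%N) (N 1%N) (N 0%N) Rl ->
  (forall i, (1 <= i <= n.+1)%N -> bounded_op (B i) (B i) (N i) (N i) Rl) ->
  (forall eta : K, 0 < eta -> exists c : K, 0 < c /\
     forall f, B 1%N f -> N 0%N (Rl f) <= c * N 0%N f + eta * N 1%N f) ->
  (forall j i, (j <= i <= n)%N ->
     forall delta : K, 0 < delta -> exists eta : K, 0 < eta /\
       forall eps, in01 eps -> eps < eta ->
         forall x, B i.+1 x -> B (i - j)%N (Ltilde L Leps j eps x) /\
                   N (i - j)%N (Ltilde L Leps j eps x) <= delta * N i.+1 x) ->
  let S := Sop Rl h nu in
  let gt := gtilde L S lam h nu heps in
  [/\ (forall delta : K, 0 < delta -> exists eta : K, 0 < eta /\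
         forall eps, in01 eps -> eps < eta -> N 0%N (gt n eps) <= delta),
      (forall k i, (k + i <= n)%N ->
         forall delta : K, 0 < delta -> exists eta : K, 0 < eta /\
           forall eps, in01 eps -> eps < eta -> N i (gt k eps) <= delta) &
      (forall k, (k <= n)%N -> exists M : K, forall eps, in01 eps ->
         B (n.+1 - k)%N (gt k eps) /\ N (n.+1 - k)%N (gt k eps) <= M)].

(* Main.v *)
Require Import Defs.
From Stdlib Require Import Reals.
From mathcomp Require Import all_boot all_order all_algebra.
From mathcomp Require Import Rstruct complex.
From mathcomp Require Import ssrAC zify.
Set Implicit Arguments. Unset Strict Implicit. Unset Printing Implicit Defensive.
Import Order.TTheory GRing.Theory Num.Theory.
Local Open Scope ring_scope.

Section Gen.
Variables (K : numFieldType) (V : lmodType K).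
Implicit Types (A : V -> Prop) (x y : V) (a : K).

Lemma subD A x y : subspace A -> A x -> A y -> A (x + y).
Proof. by case=> _ H ax ay; have := H 1 x y ax ay; rewrite scale1r. Qed.
Lemma subZ A a x : subspace A -> A x -> A (a *: x).
Proof. by case=> H0 H ax; have := H a x 0 ax H0; rewrite addr0. Qed.
Lemma subN A x : subspace A -> A x -> A (- x).
Proof. by move=> sA ax; rewrite -scaleN1r; apply: subZ. Qed.
Lemma subB A x y : subspace A -> A x -> A y -> A (x - y).
Proof. by move=> sA ax ay; apply: subD => //; apply: subN. Qed.
Lemma sub0 A : subspace A -> A 0. Proof. by case. Qed.
Lemma subsum A (I : Type) (r : seq I) (P : pred I) (F : I -> V) :
  subspace A -> (forall i, P i -> A (F i)) -> A (\sum_(i <- r | P i) F i).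
Proof.
move=> sA H; apply: big_ind => //; first exact: sub0.
by move=> *; apply: subD.
Qed.
Lemma subsum_nat A (a b : nat) (F : nat -> V) :
  subspace A -> (forall j, (a <= j < b)%N -> A (F j)) -> A (\sum_(a <= j < b) F j).
Proof.
move=> sA H; rewrite big_nat_cond; apply: subsum => // j /andP[] //.
by move=> /H.
Qed.

Lemma lin0 A f : subspace A -> linear_on A f -> f 0 = 0.
Proof.
move=> sA lf; have := lf 1 0 0 (sub0 sA) (sub0 sA).
rewrite !scale1r addr0 => /(congr1 (fun v => v - f 0)).
by rewrite addrK subrr => /esym.
Qed.
Lemma linD A f x y : subspace A -> linear_on A f -> A x -> A y -> f (x + y) = f x + f y.
Proof. by move=> sA lf ax ay; have := lf 1 x y ax ay; rewrite !scale1r. Qed.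
Lemma linZ A f a x : subspace A -> linear_on A f -> A x -> f (a *: x) = a *: f x.
Proof.
move=> sA lf ax; have := lf a x 0 ax (sub0 sA).
by rewrite !addr0 (lin0 sA lf) addr0.
Qed.
Lemma linN A f x : subspace A -> linear_on A f -> A x -> f (- x) = - f x.
Proof. by move=> sA lf ax; rewrite -scaleN1r (linZ _ sA lf ax) scaleN1r. Qed.
Lemma linB A f x y : subspace A -> linear_on A f -> A x -> A y -> f (x - y) = f x - f y.
Proof.
move=> sA lf ax ay; rewrite (linD sA lf ax (subN sA ay)).
by rewrite (linN sA lf ay).
Qed.
Lemma linsum A f (I : Type) (r : seq I) (P : pred I) (F : I -> V) :
  subspace A -> linear_on A f -> (forall i, P i -> A (F i)) ->
  f (\sum_(i <- r | P i) F i) = \sum_(i <- r | P i) f (F i).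
Proof.
move=> sA lf H; elim: r => [|i r IH]; first by rewrite !big_nil (lin0 sA lf).
rewrite !big_cons; case: ifP => Pi //.
by rewrite (linD sA lf (H i Pi) (subsum r sA H)) IH.
Qed.
Lemma linsum_nat A f (a b : nat) (F : nat -> V) :
  subspace A -> linear_on A f -> (forall j, (a <= j < b)%N -> A (F j)) ->
  f (\sum_(a <= j < b) F j) = \sum_(a <= j < b) f (F j).
Proof.
move=> sA lf H; rewrite big_nat_cond (linsum _ sA lf); last first.
  by move=> j /andP[/H].
by rewrite -big_nat_cond.
Qed.

Lemma posM (X : Type) (P : X -> Prop) (u v : X -> K) (M : K) :
  (forall z, P z -> 0 <= u z) -> (forall z, P z -> 0 <= v z) ->
  (forall z, P z -> u z <= M * v z) ->
  exists2 M', 0 <= M' & forall z, P z -> u z <= M' * v z.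
Proof.
move=> hu hv H; case: (boolP (0 <= M)) => hM; first by exists M.
exists 0 => // z Pz; rewrite mul0r; have le := H z Pz.
have := hv z Pz; rewrite le0r => /orP [/eqP vz0| vpos].
  by rewrite vz0 mulr0 in le.
have : 0 <= M * v z := le_trans (hu z Pz) le.
by rewrite pmulr_lge0 // => hM'; rewrite hM' in hM.
Qed.

Lemma eta2 e1 e2 : 0 < e1 -> 0 < e2 -> exists2 e : K, 0 < e & e <= e1 /\ e <= e2.
Proof.
move=> h1 h2; case/orP: (real_leVge (gtr0_real h1) (gtr0_real h2)) => H.
  by exists e1.
by exists e2.
Qed.

Lemma nge0 A (N : V -> K) x : is_norm_on A N -> A x -> 0 <= N x.
Proof. by case=> H *; apply: H. Qed.
End Gen.

Lemma Mp1 (K : numFieldType) (M : K) : 0 <= M -> 0 < M + 1.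
Proof. by move=> hM; apply: ltr_wpDl. Qed.
Lemma Mdiv (K : numFieldType) (M d : K) : 0 <= M -> 0 < d -> 0 < d / (M + 1).
Proof. by move=> hM hd; rewrite divr_gt0 // Mp1. Qed.
Lemma le_mul_div (K : numFieldType) (M d : K) : 0 <= M -> 0 < d -> M * (d / (M + 1)) <= d.
Proof.
move=> hM hd; rewrite mulrA ler_pdivrMr ?Mp1 //.
by rewrite mulrDr mulr1 mulrC lerDl ltW.
Qed.
Lemma hhalf_gt0 (K : numFieldType) (d : K) : 0 < d -> 0 < d / 2.
Proof. by move=> hd; rewrite divr_gt0. Qed.


Set Default Proof Using "All".
Section Fam.
Variables (K : numFieldType) (V : lmodType K).

Definition in01 (e : K) : Prop := 0 < e /\ e < 1.
Definition fmem (A : V -> Prop) (x : K -> V) := forall e, in01 e -> A (x e).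
Definition fbnd (N : V -> K) (x : K -> V) :=
  exists2 M, 0 <= M & forall e, in01 e -> N (x e) <= M.
Definition fsmall (N : V -> K) (x : K -> V) := forall d, 0 < d ->
  exists2 eta, 0 < eta & forall e, in01 e -> e < eta -> N (x e) <= d.
Definition sbnd (a : K -> K) := exists2 M, 0 <= M & forall e, in01 e -> `|a e| <= M.
Definition ssmall (a : K -> K) := forall d, 0 < d ->
  exists2 eta, 0 < eta & forall e, in01 e -> e < eta -> `|a e| <= d.

Variables (A : V -> Prop) (N : V -> K).
Hypotheses (sA : subspace A) (nA : is_norm_on A N).

Lemma nN0 x : A x -> 0 <= N x. Proof. by case: nA => H *; apply: H. Qed.
Lemma nND x y : A x -> A y -> N (x + y) <= N x + N y.
Proof. by case: nA => _ _ H _; apply: H. Qed.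
Lemma nNZ a x : A x -> N (a *: x) = `|a| * N x.
Proof. by case: nA => _ _ _ H; apply: H. Qed.
Lemma nNN x : A x -> N (- x) = N x.
Proof. by move=> ax; rewrite -scaleN1r nNZ // normrN normr1 mul1r. Qed.
Lemma nN00 : N 0 = 0.
Proof. by have := nNZ 0 (sub0 sA); rewrite scale0r normr0 mul0r. Qed.

Lemma fmemD x y : fmem A x -> fmem A y -> fmem A (fun e => x e + y e).
Proof. by move=> hx hy e he; apply: subD => //; [apply: hx | apply: hy]. Qed.
Lemma fmemN x : fmem A x -> fmem A (fun e => - x e).
Proof. by move=> hx e he; apply: subN => //; apply: hx. Qed.
Lemma fmemB x y : fmem A x -> fmem A y -> fmem A (fun e => x e - y e).
Proof. by move=> hx hy e he; apply: subB => //; [apply: hx | apply: hy]. Qed.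
Lemma fmemZ (a : K -> K) x : fmem A x -> fmem A (fun e => a e *: x e).
Proof. by move=> hx e he; apply: subZ => //; apply: hx. Qed.
Lemma fmemC v : A v -> fmem A (fun _ => v).
Proof. by move=> av e. Qed.
Lemma fmemS (I : Type) (r : seq I) (F : I -> K -> V) :
  (forall i, fmem A (F i)) -> fmem A (fun e => \sum_(i <- r) F i e).
Proof. by move=> H e he; apply: subsum => // i _; apply: H. Qed.
Lemma fmemSn (a b : nat) (F : nat -> K -> V) :
  (forall i, (a <= i < b)%N -> fmem A (F i)) -> fmem A (fun e => \sum_(a <= i < b) F i e).
Proof. by move=> H e he; apply: subsum_nat => // i /H /(_ e he). Qed.

Lemma fbndD x y : fmem A x -> fmem A y -> fbnd N x -> fbnd N y ->
  fbnd N (fun e => x e + y e).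
Proof.
move=> mx my [M1 h1 b1] [M2 h2 b2]; exists (M1 + M2); first exact: addr_ge0.
move=> e he; apply: le_trans (nND (mx e he) (my e he)) _.
by apply: lerD; [apply: b1 | apply: b2].
Qed.
Lemma fbndN x : fmem A x -> fbnd N x -> fbnd N (fun e => - x e).
Proof. by move=> mx [M h b]; exists M => // e he; rewrite nNN ?b //; apply: mx. Qed.
Lemma fbndB x y : fmem A x -> fmem A y -> fbnd N x -> fbnd N y ->
  fbnd N (fun e => x e - y e).
Proof.
by move=> mx my bx by_; apply: fbndD => //; [apply: fmemN | apply: fbndN].
Qed.
Lemma fbndZ (a : K -> K) x : sbnd a -> fmem A x -> fbnd N x ->
  fbnd N (fun e => a e *: x e).
Proof.
move=> [M1 h1 b1] mx [M2 h2 b2]; exists (M1 * M2); first exact: mulr_ge0.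
move=> e he; rewrite (nNZ _ (mx e he)).
by apply: ler_pM; [exact: normr_ge0 | exact: nN0 (mx e he) | exact: b1 | exact: b2].
Qed.
Lemma fbndC v : A v -> fbnd N (fun _ => v).
Proof. by move=> av; exists (N v) => //; apply: nN0. Qed.
Lemma fbndS (r : seq nat) (F : nat -> K -> V) :
  (forall i, i \in r -> fmem A (F i) /\ fbnd N (F i)) ->
  fbnd N (fun e => \sum_(i <- r) F i e).
Proof.
elim: r => [|i r IH] H.
  by exists 0 => // e _; rewrite big_nil nN00.
have [mi bi] := H i (mem_head _ _).
have H' : forall j, j \in r -> fmem A (F j) /\ fbnd N (F j).
  by move=> j jr; apply: H; rewrite in_cons jr orbT.
have := fbndD mi _ bi (IH H').
have mr : fmem A (fun e => \sum_(j <- r) F j e).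
  move=> e he; rewrite big_seq; apply: subsum => // j jr.
  by have [] := H' j jr; move=> /(_ e he).
move=> /(_ mr) [M hM b]; exists M => // e he; rewrite big_cons; exact: b.
Qed.
Lemma fmemSn' (a b : nat) (F : nat -> K -> V) :
  (forall i, (a <= i < b)%N -> fmem A (F i) /\ fbnd N (F i)) ->
  fmem A (fun e => \sum_(a <= i < b) F i e).
Proof. by move=> H; apply: fmemSn => i /H []. Qed.
Lemma fbndSn (a b : nat) (F : nat -> K -> V) :
  (forall i, (a <= i < b)%N -> fmem A (F i) /\ fbnd N (F i)) ->
  fbnd N (fun e => \sum_(a <= i < b) F i e).
Proof. by move=> H; apply: fbndS => i; rewrite mem_index_iota => /H. Qed.

Lemma fsmallD x y : fmem A x -> fmem A y -> fsmall N x -> fsmall N y ->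
  fsmall N (fun e => x e + y e).
Proof.
move=> mx my sx sy d hd.
have [e1 he1 b1] := sx _ (hhalf_gt0 hd); have [e2 he2 b2] := sy _ (hhalf_gt0 hd).
have [eta heta [le1 le2]] := eta2 he1 he2.
exists eta => // e he lt; apply: le_trans (nND (mx e he) (my e he)) _.
rewrite [leRHS]splitr; apply: lerD; [apply: b1 | apply: b2] => //.
  exact: lt_le_trans le1.
exact: lt_le_trans le2.
Qed.
Lemma fsmallN x : fmem A x -> fsmall N x -> fsmall N (fun e => - x e).
Proof.
move=> mx sx d hd; have [eta h b] := sx d hd; exists eta => // e he lt.
by rewrite nNN ?b //; apply: mx.
Qed.
Lemma fsmallB x y : fmem A x -> fmem A y -> fsmall N x -> fsmall N y ->
  fsmall N (fun e => x e - y e).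
Proof.
by move=> mx my sx sy; apply: fsmallD => //; [apply: fmemN | apply: fsmallN].
Qed.
Lemma fsmallZ (a : K -> K) x : sbnd a -> fmem A x -> fsmall N x ->
  fsmall N (fun e => a e *: x e).
Proof.
move=> [M hM b] mx sx d hd; have [eta h bx] := sx _ (Mdiv hM hd).
exists eta => // e he lt; rewrite (nNZ _ (mx e he)).
apply: le_trans (le_mul_div hM hd).
by apply: ler_pM; [exact: normr_ge0 | exact: nN0 (mx e he) | exact: b | exact: bx].
Qed.
Lemma fsmallZ2 (a : K -> K) x : ssmall a -> fmem A x -> fbnd N x ->
  fsmall N (fun e => a e *: x e).
Proof.
move=> sa mx [M hM bx] d hd; have [eta h b] := sa _ (Mdiv hM hd).
exists eta => // e he lt; rewrite (nNZ _ (mx e he)).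
apply: le_trans (le_mul_div hM hd); rewrite mulrC.
by apply: ler_pM; [exact: nN0 (mx e he) | exact: normr_ge0 | exact: bx | exact: b].
Qed.
Lemma fsmallE x : fmem A x -> fbnd N x -> fsmall N (fun e => e *: x e).
Proof.
move=> mx [M hM bx] d hd; exists (d / (M + 1)); first exact: Mdiv.
move=> e he lt; have [e0 e1] := he; rewrite (nNZ _ (mx e he)) (ger0_norm (ltW e0)).
apply: le_trans (le_mul_div hM hd); rewrite [leRHS]mulrC.
apply: ler_pM; [exact: ltW | exact: nN0 (mx e he) | exact: ltW | exact: bx].
Qed.
Lemma fsmallS (r : seq nat) (F : nat -> K -> V) :
  (forall i, i \in r -> fmem A (F i) /\ fsmall N (F i)) ->
  fsmall N (fun e => \sum_(i <- r) F i e).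
Proof.
elim: r => [|i r IH] H.
  by move=> d hd; exists 1 => // e _ _; rewrite big_nil nN00 ltW.
have [mi bi] := H i (mem_head _ _).
have H' : forall j, j \in r -> fmem A (F j) /\ fsmall N (F j).
  by move=> j jr; apply: H; rewrite in_cons jr orbT.
have mr : fmem A (fun e => \sum_(j <- r) F j e).
  move=> e he; rewrite big_seq; apply: subsum => // j jr.
  by have [] := H' j jr; move=> /(_ e he).
move=> d hd; have [eta h b] := fsmallD mi mr bi (IH H') hd.
by exists eta => // e he lt; rewrite big_cons; apply: b.
Qed.
Lemma fsmallSn (a b : nat) (F : nat -> K -> V) :
  (forall i, (a <= i < b)%N -> fmem A (F i) /\ fsmall N (F i)) ->
  fsmall N (fun e => \sum_(a <= i < b) F i e).
Proof. by move=> H; apply: fsmallS => i; rewrite mem_index_iota => /H. Qed.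

Lemma fbnd_ext x y : (forall e, in01 e -> x e = y e) -> fbnd N x -> fbnd N y.
Proof. by move=> E [M h b]; exists M => // e he; rewrite -E ?b. Qed.
Lemma fsmall_ext x y : (forall e, in01 e -> x e = y e) -> fsmall N x -> fsmall N y.
Proof.
by move=> E s d hd; have [eta h b] := s d hd; exists eta => // e he lt; rewrite -E ?b.
Qed.
Lemma fmem_ext x y : (forall e, in01 e -> x e = y e) -> fmem A x -> fmem A y.
Proof. by move=> E m e he; rewrite -E //; apply: m. Qed.

Lemma sbnd_fun (nu : V -> K) M x : (forall f, A f -> `|nu f| <= M * N f) ->
  fmem A x -> fbnd N x -> sbnd (fun e => nu (x e)).
Proof.
move=> H mx [M2 h2 b2].
have [M' hM' H'] := posM (fun f _ => normr_ge0 (nu f)) nN0 H.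
exists (M' * M2); first exact: mulr_ge0.
move=> e he; apply: le_trans (H' _ (mx e he)) _.
by apply: ler_wpM2l => //; apply: b2.
Qed.
Lemma ssmall_fun (nu : V -> K) M x : (forall f, A f -> `|nu f| <= M * N f) ->
  fmem A x -> fsmall N x -> ssmall (fun e => nu (x e)).
Proof.
move=> H mx sx.
have [M' hM' H'] := posM (fun f _ => normr_ge0 (nu f)) nN0 H.
move=> d hd; have [eta h b] := sx _ (Mdiv hM' hd).
exists eta => // e he lt; apply: le_trans (H' _ (mx e he)) _.
apply: le_trans (le_mul_div hM' hd).
by apply: ler_wpM2l => //; apply: b.
Qed.

Variables (A' : V -> Prop) (N' : V -> K).
Hypotheses (sA' : subspace A') (nA' : is_norm_on A' N').

Lemma fop (T : K -> V -> V) M x :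
  (forall e, in01 e -> forall z, A z -> A' (T e z) /\ N' (T e z) <= M * N z) ->
  fmem A x -> fbnd N x ->
  fmem A' (fun e => T e (x e)) /\ fbnd N' (fun e => T e (x e)).
Proof.
move=> H mx [M2 h2 b2]; split.
  by move=> e he; have [] := H e he _ (mx e he).
have [M' hM' H'] := @posM _ (K * V)%type (fun p => in01 p.1 /\ A p.2)
   (fun p => N' (T p.1 p.2)) (fun p => N p.2) M
   (fun p '(conj h1 h2) => nge0 nA' (proj1 (H _ h1 _ h2)))
   (fun p '(conj h1 h2) => nge0 nA h2)
   (fun p '(conj h1 h2) => proj2 (H _ h1 _ h2)).
exists (M' * M2); first exact: mulr_ge0.
move=> e he; apply: le_trans (H' (e, x e) (conj he (mx e he))) _.
by apply: ler_wpM2l => //; apply: b2.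
Qed.
Lemma fop_small (T : K -> V -> V) M x :
  (forall e, in01 e -> forall z, A z -> A' (T e z) /\ N' (T e z) <= M * N z) ->
  fmem A x -> fsmall N x -> fsmall N' (fun e => T e (x e)).
Proof.
move=> H mx sx.
have [M' hM' H'] := @posM _ (K * V)%type (fun p => in01 p.1 /\ A p.2)
   (fun p => N' (T p.1 p.2)) (fun p => N p.2) M
   (fun p '(conj h1 h2) => nge0 nA' (proj1 (H _ h1 _ h2)))
   (fun p '(conj h1 h2) => nge0 nA h2)
   (fun p '(conj h1 h2) => proj2 (H _ h1 _ h2)).
move=> d hd; have [eta h b] := sx _ (Mdiv hM' hd).
exists eta => // e he lt; apply: le_trans (H' (e, x e) (conj he (mx e he))) _.
apply: le_trans (le_mul_div hM' hd).
by apply: ler_wpM2l => //; apply: b.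
Qed.
Lemma fop_small2 (T : K -> V -> V) x :
  (forall d, 0 < d -> exists2 eta, 0 < eta & forall e, in01 e -> e < eta ->
     forall z, A z -> A' (T e z) /\ N' (T e z) <= d * N z) ->
  fmem A x -> fbnd N x -> fsmall N' (fun e => T e (x e)).
Proof.
move=> H mx [M hM b] d hd; have [eta h bT] := H _ (Mdiv hM hd).
exists eta => // e he lt; have [_ le] := bT e he lt _ (mx e he).
apply: le_trans le _; apply: le_trans (le_mul_div hM hd); rewrite mulrC.
by apply: ler_wpM2r; [apply: ltW; apply: Mdiv | apply: b].
Qed.

End Fam.
Unset Default Proof Using.

Lemma rec_alg (K : numFieldType) (V : lmodType K) (e : K) (k : nat) (D u : V) :
  e != 0 -> e *: (u + e ^- k.+1 *: (D - e ^+ k.+1 *: u)) = e ^- k *: D.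
Proof.
move=> e0; rewrite scalerDr scalerBr !scalerA mulVf ?expf_neq0 // scale1r.
have E1 : e * e ^- k.+1 = e ^- k by rewrite exprS invfM mulrA mulfV // mul1r.
by rewrite scalerBr scalerA E1 addrC subrK.
Qed.

Lemma id1 (K : numFieldType) (V : lmodType K) (U W G T H : V) :
  (U + W) + (G + T) = (W + (G - H) + T) + (U + H).
Proof. by rewrite !addrA [RHS](ACl ((5*1*2*4)*(3*6))) /= addNr addr0. Qed.
Lemma id2 (K : numFieldType) (V : lmodType K) (X Y R P g h : V) (a b : K) :
  (X + Y) + (a + b) *: g - (R + P) - ((X + b *: h) - P) =
  (Y + b *: (g - h)) + a *: g - R.
Proof.
rewrite scalerDl scalerBr !opprD !opprK !addrA.
by rewrite [LHS](ACl ((2*4*8*3*5)*(1*7)*(6*9))) /= subrr addr0 addNr addr0.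
Qed.

Lemma scal_cancel (K : numFieldType) (V : lmodType K) (e c : K) (w : V) :
  e != 0 -> e^-1 *: (c *: (e *: w)) = c *: w.
Proof.
by move=> e0; rewrite !scalerA; congr (_ *: _); rewrite ?mulrA mulrAC mulVf // mul1r.
Qed.

Lemma half01 (K : numFieldType) : in01 (2^-1 : K).
Proof. split; first by rewrite invr_gt0 ltr0n. by rewrite invf_lt1 ?ltr0n // ltr1n. Qed.
Lemma sbndC (K : numFieldType) (c : K) : sbnd (fun _ : K => c).
Proof. by exists `|c|. Qed.

Section Main.
Variables (K : numFieldType) (V : lmodType K) (n : nat) (B : nat -> V -> Prop)
  (N : nat -> V -> K) (L : nat -> V -> V) (Leps : K -> V -> V) (lam : K) (h : V)
  (nu : V -> K) (D0 : V -> Prop) (Rl : V -> V) (lameps : K -> K) (heps : K -> V).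
Hypotheses
  (HB0 : forall x, B 0%N x)
  (Hchain : forall i, (i <= n)%N -> forall x, B i.+1 x -> B i x)
  (Hban : forall i, (i <= n.+1)%N -> banach_on (B i) (N i))
  (HLlin : forall j, (j <= n)%N -> linear_on (B j) (L j))
  (Hlam : lam != 0)
  (Hh : B n.+1 h)
  (Hnu : forall (a : K) x y, nu (a *: x + y) = a * nu x + nu y)
  (HnuL : forall f, nu (L 0%N f) = lam * nu f)
  (HLh : L 0%N h = lam *: h)
  (Hnuh : nu h = 1)
  (HD0 : subspace D0)
  (HB1D : forall x, B 1%N x -> D0 x)
  (HRl : forall f, D0 f -> L 0%N (Rl f) - (lam * nu (Rl f)) *: h - lam *: Rl f = f)
  (HRu : forall f, D0 f -> forall g1 g2,
      L 0%N g1 - (lam * nu g1) *: h - lam *: g1 = f ->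
      L 0%N g2 - (lam * nu g2) *: h - lam *: g2 = f -> g1 = g2)
  (HRB : forall i, (1 <= i <= n.+1)%N -> forall x, B i x -> B i (Rl x))
  (HLeps : forall eps, in01 eps -> linear_on (fun _ => True) (Leps eps))
  (Hheps : forall eps, in01 eps ->
     [/\ B n.+1 (heps eps), Leps eps (heps eps) = lameps eps *: heps eps
       & nu (heps eps) != 0])
  (Hnub : exists M : K, forall f, `|nu f| <= M * N 0%N f)
  (HLb : forall j i, (j <= n)%N -> (j <= i <= n.+1)%N ->
     bounded_op (B i) (B (i - j)%N) (N i) (N (i - j)%N) (L j))
  (HLtb : forall j i, (j <= n)%N -> (j <= i <= n.+1)%N ->
     exists M : K, forall eps, in01 eps ->
       forall x, B i x -> B (i - j)%N (Ltilde L Leps j eps x) /\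
                 N (i - j)%N (Ltilde L Leps j eps x) <= M * N i x)
  (Hgb : forall i, (i <= n.+1)%N ->
     exists M : K, forall eps, in01 eps -> N i (geps nu heps eps) <= M)
  (HRb1 : bounded_op (B 1%N) (B 0%N) (N 1%N) (N 0%N) Rl)
  (HRbi : forall i, (1 <= i <= n.+1)%N -> bounded_op (B i) (B i) (N i) (N i) Rl)
  (Hweak : forall eta : K, 0 < eta -> exists c : K, 0 < c /\
     forall f, B 1%N f -> N 0%N (Rl f) <= c * N 0%N f + eta * N 1%N f)
  (Hc : forall j i, (j <= i <= n)%N ->
     forall delta : K, 0 < delta -> exists eta : K, 0 < eta /\
       forall eps, in01 eps -> eps < eta ->
         forall x, B i.+1 x -> B (i - j)%N (Ltilde L Leps j eps x) /\
                   N (i - j)%N (Ltilde L Leps j eps x) <= delta * N i.+1 x).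

Let S := Sop Rl h nu.
Let g e := geps nu heps e.
Let gkk k := gk L S lam h nu k.
Let lk k := lamk L S lam h nu k.
Let gt k e := gtilde L S lam h nu heps k e.
Let Lt j e x := Ltilde L Leps j e x.

Lemma sB i : (i <= n.+1)%N -> subspace (B i).
Proof. by move=> /Hban []. Qed.
Lemma nB i : (i <= n.+1)%N -> is_norm_on (B i) (N i).
Proof. by move=> /Hban []. Qed.

Lemma Bmono i j x : (i <= j <= n.+1)%N -> B j x -> B i x.
Proof.
move=> /andP[ij jn]; have [k Ej] : exists k, j = (i + k)%N by exists (j - i)%N; lia.
subst j; clear ij; elim: k jn => [|k IH] jn; first by rewrite addn0.
move=> Bx; apply: IH; first by lia.
by apply: (Hchain (i := (i + k)%N)); [lia | rewrite -addnS].
Qed.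

Lemma nu0 : nu 0 = 0.
Proof.
have := Hnu 1 0 0; rewrite scale1r addr0 mul1r => /(congr1 (fun v => v - nu 0)).
by rewrite addrK subrr => /esym.
Qed.
Lemma nuD x y : nu (x + y) = nu x + nu y.
Proof. by have := Hnu 1 x y; rewrite scale1r mul1r. Qed.
Lemma nuZ a x : nu (a *: x) = a * nu x.
Proof. by have := Hnu a x 0; rewrite addr0 nu0 addr0. Qed.
Lemma nuN x : nu (- x) = - nu x.
Proof. by rewrite -scaleN1r nuZ mulN1r. Qed.
Lemma nuB x y : nu (x - y) = nu x - nu y.
Proof. by rewrite nuD nuN. Qed.
Lemma nu_sum (a b : nat) (F : nat -> V) :
  nu (\sum_(a <= j < b) F j) = \sum_(a <= j < b) nu (F j).
Proof.
elim: (index_iota a b) => [|i r IH]; first by rewrite !big_nil nu0.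
by rewrite !big_cons nuD IH.
Qed.

Lemma Bh i : (i <= n.+1)%N -> B i h.
Proof. by move=> hi; apply: (@Bmono i n.+1) => //; rewrite hi leqnn. Qed.
Lemma Dh : D0 h.
Proof. by apply: HB1D; apply: Bh. Qed.
Lemma BD i x : (1 <= i <= n.+1)%N -> B i x -> D0 x.
Proof. by move=> hi Bx; apply: HB1D; apply: (@Bmono 1 i). Qed.

Lemma nu_g e : in01 e -> nu (g e) = 1.
Proof. by move=> he; rewrite /g /geps nuZ mulVf //; case: (Hheps he). Qed.
Lemma Bg e i : in01 e -> (i <= n.+1)%N -> B i (g e).
Proof.
move=> he hi; apply: (@Bmono i n.+1); first by rewrite hi leqnn.
by rewrite /g /geps; apply: subZ; [apply: sB | case: (Hheps he)].
Qed.
Lemma Leps_g e : in01 e -> Leps e (g e) = lameps e *: g e.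
Proof.
move=> he; rewrite /g /geps; have lf := HLeps he.
have sT : subspace (fun _ : V => True) by [].
rewrite (linZ _ sT lf) //; case: (Hheps he) => _ -> _.
by rewrite !scalerA mulrC.
Qed.

Let Q y := L 0%N y - (lam * nu y) *: h - lam *: y.
Lemma lin0L : linear_on (B 0%N) (L 0%N).
Proof. exact: HLlin. Qed.
Lemma QD x y : Q (x + y) = Q x + Q y.
Proof.
rewrite /Q (linD (sB (leq0n _)) lin0L) ?HB0 // nuD mulrDr scalerDl scalerDr.
by rewrite !opprD !addrA [LHS](ACl (1*3*5*2*4*6)) /= ?addrA.
Qed.
Lemma QZ a x : Q (a *: x) = a *: Q x.
Proof.
rewrite /Q (linZ _ (sB (leq0n _)) lin0L) ?HB0 // nuZ !scalerBr !scalerA.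
by rewrite mulrCA [lam * a]mulrC.
Qed.
Lemma Rl_lin : linear_on D0 Rl.
Proof.
move=> a f1 f2 D1 D2; have Df : D0 (a *: f1 + f2) by apply: subD => //; apply: subZ.
apply: (HRu Df (HRl Df)).
by rewrite -/(Q _) QD QZ /Q !HRl.
Qed.
Lemma DS x : D0 x -> D0 (x - nu x *: h).
Proof. by move=> Dx; apply: subB => //; apply: subZ => //; apply: Dh. Qed.
Lemma S_lin : linear_on D0 S.
Proof.
move=> a x y Dx Dy; rewrite /S /Sop -(Rl_lin _ (DS Dx) (DS Dy)); congr Rl.
rewrite Hnu scalerDl scalerBr scalerA !opprD !addrA.
by rewrite [LHS](ACl (1*3*2*4)) /= ?addrA.
Qed.

Lemma size_coefs m : size (coefs L S lam h nu m) = m.+1.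
Proof. by elim: m => [|m IH] //=; rewrite size_rcons IH. Qed.
Lemma nth_coefs m k : (k <= m)%N ->
  nth (0, 0) (coefs L S lam h nu m) k = nth (0, 0) (coefs L S lam h nu k) k.
Proof.
elim: m => [|m IH]; first by rewrite leqn0 => /eqP ->.
rewrite leq_eqVlt => /orP [/eqP -> //| km].
by rewrite /= nth_rcons size_coefs km IH.
Qed.
Lemma gk0 : gkk 0%N = h. Proof. by []. Qed.
Lemma gk_rec k : gkk k.+1 =
  \sum_(1 <= j < k.+2) S (lk j *: gkk (k.+1 - j) - L j (gkk (k.+1 - j))).
Proof.
rewrite /gkk /gk /=. rewrite nth_rcons size_coefs ltnn eqxx /=.
apply: eq_big_nat => j /andP[j1 j2].
rewrite nth_coefs; last by lia.
rewrite nth_rcons size_coefs.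
case: (ltnP j k.+1) => jk.
  by rewrite nth_coefs.
have -> : j = k.+1 by lia.
by rewrite eqxx /= /lk /lamk /= nth_rcons size_coefs ltnn eqxx.
Qed.
Lemma lk_rec k : lk k.+1 = \sum_(1 <= j < k.+2) nu (L j (gkk (k.+1 - j))).
Proof.
rewrite /lk /lamk /= nth_rcons size_coefs ltnn eqxx /=.
apply: eq_big_nat => j /andP[j1 j2].
by rewrite nth_coefs; last by lia.
Qed.

Lemma BL j i x : (j <= n)%N -> (j <= i <= n.+1)%N -> B i x -> B (i - j)%N (L j x).
Proof. by move=> jn hi Bx; have [M H] := HLb jn hi; case: (H x Bx). Qed.
Lemma BLt j i e x : in01 e -> (j <= n)%N -> (j <= i <= n.+1)%N -> B i x ->
  B (i - j)%N (Lt j e x).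
Proof. by move=> he jn hi Bx; have [M H] := HLtb jn hi; case: (H e he x Bx). Qed.
Lemma BS i x : (1 <= i <= n.+1)%N -> B i x -> B i (S x).
Proof.
move=> hi Bx; rewrite /S /Sop; apply: HRB => //.
have hi' : (i <= n.+1)%N by case/andP: hi.
by apply: subB => //; [apply: sB | apply: subZ; [apply: sB | apply: Bh]].
Qed.
Lemma BL' j m x : (j <= m <= n)%N -> B (n.+1 - (m - j))%N x -> B (n.+1 - m)%N (L j x).
Proof.
move=> hm Bx; have := @BL j (n.+1 - (m - j))%N x.
have -> : (n.+1 - (m - j) - j = n.+1 - m)%N by lia.
by apply => //; lia.
Qed.
Lemma Bgk k : (k <= n)%N -> B (n.+1 - k)%N (gkk k).
Proof.
elim/ltn_ind: k => k IH kn; case: k IH kn => [|k] IH kn.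
  by rewrite gk0 subn0.
have hi : (1 <= n.+1 - k.+1 <= n.+1)%N by lia.
have sb : subspace (B (n.+1 - k.+1)%N) by apply: sB; lia.
rewrite gk_rec; apply: subsum_nat => // j /andP[j1 j2].
apply: BS => //; apply: subB => //.
  apply: subZ => //; apply: (@Bmono _ (n.+1 - (k.+1 - j))%N); first by lia.
  by apply: IH; lia.
by apply: BL'; [lia | apply: IH; lia].
Qed.
Lemma Bgt k e : in01 e -> (k <= n)%N -> B (n.+1 - k)%N (gt k e).
Proof.
move=> he kn; have sb : subspace (B (n.+1 - k)%N) by apply: sB; lia.
rewrite /gt /gtilde; apply: subZ => //; apply: subB => //.
  by apply: Bg => //; lia.
apply: subsum_nat => // i /andP[_ ik]; apply: subZ => //.
by apply: (@Bmono _ (n.+1 - i)%N); [lia | apply: Bgk; lia].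
Qed.

Lemma e_neq0 (e : K) : in01 e -> e != 0.
Proof. by case=> e0 _; apply: lt0r_neq0. Qed.
Lemma gt0 e : gt 0%N e = g e - h.
Proof. by rewrite /gt /gtilde expr0 invr1 scale1r big_nat1 expr0 scale1r. Qed.
Lemma gt_rec k e : in01 e -> gt k e = e *: (gkk k.+1 + gt k.+1 e).
Proof.
move=> he; rewrite /gt /gtilde (big_nat_recr k.+1) //= opprD addrA.
by rewrite rec_alg // e_neq0.
Qed.
Lemma Lt0 e x : Lt 0%N e x = Leps e x - L 0%N x.
Proof. by rewrite /Lt /Ltilde expr0 invr1 scale1r big_geq // subr0. Qed.
Lemma Lt_rec k e x : in01 e -> Lt k e x = e *: (L k.+1 x + Lt k.+1 e x).
Proof.
move=> he; rewrite /Lt /Ltilde (big_nat_recr k.+1) //= opprD addrA.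
by rewrite rec_alg // e_neq0.
Qed.

Definition RF m e := \sum_(1 <= j < m.+1) L j (gt (m - j)%N e) + Lt m e (g e).
Definition TF m e :=
  \sum_(1 <= j < m.+1) lk j *: gt (m - j)%N e + nu (RF m e) *: g e - RF m e.
Definition Gs m := \sum_(1 <= j < m.+1) (lk j *: gkk (m - j)%N - L j (gkk (m - j)%N)).
Definition PF m := \sum_(1 <= j < m.+1) L j (gkk (m - j)%N).

Lemma BRF m e : in01 e -> (m <= n)%N -> B (n.+1 - m)%N (RF m e).
Proof.
move=> he mn; have sb : subspace (B (n.+1 - m)%N) by apply: sB; lia.
apply: subD => //.
  apply: subsum_nat => // j /andP[j1 j2]; apply: BL'; first by lia.
  by apply: Bgt => //; lia.
by apply: BLt => //; [lia | apply: Bg].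
Qed.
Lemma BTF m e : in01 e -> (m <= n)%N -> B (n.+1 - m)%N (TF m e).
Proof.
move=> he mn; have sb : subspace (B (n.+1 - m)%N) by apply: sB; lia.
apply: subB => //; last exact: BRF.
apply: subD => //; last by apply: subZ => //; apply: Bg => //; lia.
apply: subsum_nat => // j /andP[j1 j2]; apply: subZ => //.
by apply: (@Bmono _ (n.+1 - (m - j))%N); [lia | apply: Bgt => //; lia].
Qed.
Lemma BGs m : (m <= n)%N -> B (n.+1 - m)%N (Gs m).
Proof.
move=> mn; have sb : subspace (B (n.+1 - m)%N) by apply: sB; lia.
apply: subsum_nat => // j /andP[j1 j2]; apply: subB => //.
  apply: subZ => //.
  by apply: (@Bmono _ (n.+1 - (m - j))%N); [lia | apply: Bgk; lia].
by apply: BL'; [lia | apply: Bgk; lia].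
Qed.
Lemma gk_S k : (k.+1 <= n)%N -> gkk k.+1 = S (Gs k.+1).
Proof.
move=> kn; rewrite gk_rec /Gs (linsum_nat HD0 S_lin) // => j /andP[j1 j2].
apply: (@BD (n.+1 - k.+1)%N); first by lia.
apply: subB; first by apply: sB; lia.
  apply: subZ; first by apply: sB; lia.
  by apply: (@Bmono _ (n.+1 - (k.+1 - j))%N); [lia | apply: Bgk; lia].
by apply: BL'; [lia | apply: Bgk; lia].
Qed.
Lemma lk_P k : lk k.+1 = nu (PF k.+1).
Proof. by rewrite lk_rec /PF nu_sum. Qed.

Lemma RF_rec k e : in01 e -> (k.+1 <= n)%N -> e^-1 *: RF k e = RF k.+1 e + PF k.+1.
Proof.
move=> he kn; have e0 := e_neq0 he.
have Hs : \sum_(1 <= j < k.+1) L j (gt (k - j)%N e) =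
   \sum_(1 <= j < k.+1) e *: (L j (gkk (k.+1 - j)%N) + L j (gt (k.+1 - j)%N e)).
  apply: eq_big_nat => j /andP[j1 j2].
  rewrite (gt_rec _ he); have -> : (k - j).+1 = (k.+1 - j)%N by lia.
  have jn : (j <= n)%N by lia.
  have Bu : B j (gkk (k.+1 - j)%N).
    by apply: (@Bmono _ (n.+1 - (k.+1 - j))%N); [lia | apply: Bgk; lia].
  have Bv : B j (gt (k.+1 - j)%N e).
    by apply: (@Bmono _ (n.+1 - (k.+1 - j))%N); [lia | apply: Bgt => //; lia].
  have sj : subspace (B j) by apply: sB; lia.
  rewrite (linZ _ sj (HLlin jn)); last by apply: subD.
  by rewrite (linD sj (HLlin jn)).
rewrite /RF Hs (Lt_rec _ _ he) -scaler_sumr -scalerDr scalerA mulVf // scale1r.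
rewrite big_split /= (big_nat_recr k.+1) //= subnn gt0 /PF (big_nat_recr k.+1) //= subnn gk0.
rewrite (linB (sB _) (HLlin kn)); first exact: id1.
- by lia.
- by apply: Bg => //; lia.
- by apply: Bh; lia.
Qed.

Lemma TF_step k e : in01 e -> (k.+1 <= n)%N -> e^-1 *: TF k e - Gs k.+1 = TF k.+1 e.
Proof.
move=> he kn; have e0 := e_neq0 he.
have HA : e^-1 *: \sum_(1 <= j < k.+1) lk j *: gt (k - j)%N e =
   \sum_(1 <= j < k.+1) lk j *: gkk (k.+1 - j)%N +
   \sum_(1 <= j < k.+1) lk j *: gt (k.+1 - j)%N e.
  rewrite scaler_sumr -big_split; apply: eq_big_nat => j /andP[j1 j2].
  rewrite (gt_rec _ he); have -> : (k - j).+1 = (k.+1 - j)%N by lia.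
  by rewrite scal_cancel // scalerDr.
have Hnu1 : e^-1 * nu (RF k e) = nu (RF k.+1 e) + lk k.+1.
  by rewrite -nuZ RF_rec // nuD lk_P.
have HG : Gs k.+1 = (\sum_(1 <= j < k.+1) lk j *: gkk (k.+1 - j)%N + lk k.+1 *: h)
    - PF k.+1.
  by rewrite /Gs sumrB (big_nat_recr k.+1) //= subnn gk0.
have HT : TF k.+1 e = (\sum_(1 <= j < k.+1) lk j *: gt (k.+1 - j)%N e
    + lk k.+1 *: (g e - h)) + nu (RF k.+1 e) *: g e - RF k.+1 e.
  by rewrite /TF (big_nat_recr k.+1) //= subnn gt0.
rewrite HG HT /TF scalerBr scalerDr scalerA Hnu1 HA RF_rec //.
exact: id2.
Qed.

Lemma key0 e : in01 e -> gt 0%N e = S (TF 0%N e).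
Proof.
move=> he.
have DT : D0 (TF 0%N e).
  apply: (@BD n.+1); first by rewrite leqnn.
  by have := BTF he (leq0n n); rewrite subn0; apply.
have HR : RF 0%N e = Leps e (g e) - L 0%N (g e).
  by rewrite /RF big_geq // add0r Lt0.
have HT : TF 0%N e = nu (RF 0%N e) *: g e - RF 0%N e.
  by rewrite /TF big_geq // add0r.
have Hn : nu (TF 0%N e) = 0 by rewrite HT nuB nuZ nu_g // mulr1 subrr.
rewrite /S /Sop Hn scale0r subr0 gt0.
apply: (HRu DT _ (HRl DT)).
have Bg0 : B 0%N (g e) by apply: HB0.
rewrite (linB (sB (leq0n _)) lin0L) ?HB0 // HLh nuB nu_g // Hnuh subrr mulr0 scale0r subr0.
rewrite HT HR nuB Leps_g // nuZ HnuL nu_g // !mulr1 scalerBl scalerBr.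
rewrite !opprD !opprK !addrA.
by rewrite [LHS](ACl (1*3*(2*4))) /= addNr addr0 [RHS](ACl ((4*2)*(1*3))) /= subrr addr0.
Qed.

Lemma key m e : in01 e -> (m <= n)%N -> gt m e = S (TF m e).
Proof.
move=> he; elim: m => [|k IH] kn; first exact: key0.
have e0 := e_neq0 he.
have E1 : gt k.+1 e = e^-1 *: gt k e - gkk k.+1.
  by rewrite (gt_rec k he) scalerA mulVf // scale1r addrAC subrr add0r.
have DT : D0 (TF k e) by apply: (@BD (n.+1 - k)%N); [lia | apply: BTF => //; lia].
have DG : D0 (Gs k.+1) by apply: (@BD (n.+1 - k.+1)%N); [lia | apply: BGs].
rewrite E1 IH ?(ltnW kn) // gk_S //.
rewrite -(linZ _ HD0 S_lin DT) -(linB HD0 S_lin _ DG); last by apply: subZ.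
by rewrite TF_step.
Qed.

Lemma fbg i : (i <= n.+1)%N -> fmem (B i) g /\ fbnd (N i) g.
Proof.
move=> hi; split; first by move=> e he; apply: Bg.
have [M HM] := Hgb hi; exists M => //.
apply: le_trans (HM _ (half01 K)); apply: (nge0 (nB hi)); apply: Bg => //; exact: half01.
Qed.
Lemma fmgt k i : (k <= n)%N -> (i <= n.+1 - k)%N -> fmem (B i) (gt k).
Proof.
by move=> kn hi e he; apply: (@Bmono _ (n.+1 - k)%N); [lia | apply: Bgt].
Qed.

Lemma fL j i x : (j <= n)%N -> (j <= i <= n.+1)%N -> fmem (B i) x -> fbnd (N i) x ->
  fmem (B (i - j)%N) (fun e => L j (x e)) /\ fbnd (N (i - j)%N) (fun e => L j (x e)).
Proof.
move=> jn hi mx bx; have [M H] := HLb jn hi.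
have hi1 : (i <= n.+1)%N by lia. have hi2 : (i - j <= n.+1)%N by lia.
by apply: (fop (sB hi1) (nB hi1) (sB hi2) (nB hi2) (T := fun _ => L j) (M := M)) => // e _ z Bz; apply: H.
Qed.
Lemma fLs j i x : (j <= n)%N -> (j <= i <= n.+1)%N -> fmem (B i) x -> fsmall (N i) x ->
  fsmall (N (i - j)%N) (fun e => L j (x e)).
Proof.
move=> jn hi mx bx; have [M H] := HLb jn hi.
have hi1 : (i <= n.+1)%N by lia. have hi2 : (i - j <= n.+1)%N by lia.
by apply: (fop_small (sB hi1) (nB hi1) (sB hi2) (nB hi2) (T := fun _ => L j) (M := M)) => // e _ z Bz; apply: H.
Qed.
Lemma fLt j i x : (j <= n)%N -> (j <= i <= n.+1)%N -> fmem (B i) x -> fbnd (N i) x ->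
  fmem (B (i - j)%N) (fun e => Lt j e (x e)) /\ fbnd (N (i - j)%N) (fun e => Lt j e (x e)).
Proof.
move=> jn hi mx bx; have [M H] := HLtb jn hi.
have hi1 : (i <= n.+1)%N by lia. have hi2 : (i - j <= n.+1)%N by lia.
by apply: (fop (sB hi1) (nB hi1) (sB hi2) (nB hi2) (T := Lt j) (M := M)).
Qed.
Lemma fLtc j i x : (j <= i <= n)%N -> fmem (B i.+1) x -> fbnd (N i.+1) x ->
  fsmall (N (i - j)%N) (fun e => Lt j e (x e)).
Proof.
move=> hi mx bx.
have hi1 : (i.+1 <= n.+1)%N by lia. have hi2 : (i - j <= n.+1)%N by lia.
apply: (fop_small2 (sB hi1) (nB hi1) (sB hi2) (nB hi2) (T := Lt j)) => //.
by move=> d hd; have [eta [he H]] := Hc hi hd; exists eta.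
Qed.

Lemma Hnub' : exists2 M, 0 <= M & forall f, B 0%N f -> `|nu f| <= M * N 0%N f.
Proof.
have [M H] := Hnub.
have [M' hM' H'] := @posM K V (fun f => B 0%N f) (fun f => `|nu f|) (N 0%N) M
   (fun f _ => normr_ge0 _) (fun f Bf => nge0 (nB (leq0n _)) Bf) (fun f _ => H f).
by exists M'.
Qed.

Lemma fS k x : (1 <= k <= n.+1)%N -> fmem (B k) x -> (forall l, (l <= k)%N -> fbnd (N l) x) ->
  forall i, (i <= k)%N -> fmem (B i) (fun e => S (x e)) /\ fbnd (N i) (fun e => S (x e)).
Proof.
move=> hk mx bx.
have [M0 hM0 H0] := Hnub'.
have sn : sbnd (fun e => nu (x e)).
  apply: (sbnd_fun (sB (leq0n _)) (nB (leq0n _)) (M := M0) H0 _ (bx 0%N (leq0n _))).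
  by move=> e he; apply: HB0.
pose y e := x e - nu (x e) *: h.
have my : forall l, (l <= k)%N -> fmem (B l) y.
  move=> l lk0 e he; have hl : (l <= n.+1)%N by lia.
  apply: subB; first exact: sB.
    by apply: (@Bmono _ k); [lia | apply: mx].
  by apply: subZ; [apply: sB | apply: Bh].
have by_ : forall l, (l <= k)%N -> fbnd (N l) y.
  move=> l lk0; have hl : (l <= n.+1)%N by lia.
  apply: (fbndB (sB hl) (nB hl)); first by move=> e he; apply: (@Bmono _ k); [lia | apply: mx].
  - by apply: fmemZ (sB hl) (nB hl) _ _ _; apply: fmemC (sB hl) (nB hl) _ (Bh hl).
  - exact: bx.
  apply: (fbndZ (sB hl) (nB hl)) => //; first by apply: fmemC (sB hl) (nB hl) _ (Bh hl).
  exact: fbndC (sB hl) (nB hl) _ (Bh hl).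
have hk1 : (1 <= k)%N by case/andP: hk.
move=> i ik; case: i ik => [|i] ik.
  have [M H] := HRb1.
  have h1 : (1 <= n.+1)%N by lia.
  have HH : forall e : K, in01 e -> forall z, B 1%N z -> B 0%N (Rl z) /\ N 0%N (Rl z) <= M * N 1%N z.
    by move=> e _ z Bz; apply: H.
  exact: (fop (sB h1) (nB h1) (sB (leq0n _)) (nB (leq0n _)) (T := fun _ => Rl) (M := M) (x := y) HH (my 1%N hk1) (by_ 1%N hk1)).
have hi : (1 <= i.+1 <= n.+1)%N by lia.
have [M H] := HRbi hi; have hi1 : (i.+1 <= n.+1)%N by lia.
have HH : forall e : K, in01 e -> forall z, B i.+1 z -> B i.+1 (Rl z) /\ N i.+1 (Rl z) <= M * N i.+1 z.
  by move=> e _ z Bz; apply: H.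
exact: (fop (sB hi1) (nB hi1) (sB hi1) (nB hi1) (T := fun _ => Rl) (M := M) (x := y) HH (my _ ik) (by_ _ ik)).
Qed.

Lemma fSsmall x : fmem (B 1%N) x -> fsmall (N 0%N) x -> fbnd (N 0%N) x -> fbnd (N 1%N) x ->
  fsmall (N 0%N) (fun e => S (x e)).
Proof.
move=> mx sx b0 b1.
have h1 : (1 <= n.+1)%N by lia.
have s0 := sB (leq0n n.+1); have n0 := nB (leq0n n.+1).
have s1 := sB h1; have n1 := nB h1.
have [M0 hM0 H0] := Hnub'.
have mx0 : fmem (B 0%N) x by move=> e he; apply: HB0.
have sn : sbnd (fun e => nu (x e)) by apply: (sbnd_fun s0 n0 (M := M0)).
have ssn : ssmall (fun e => nu (x e)) by apply: (ssmall_fun s0 n0 (M := M0)).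
pose y e := x e - nu (x e) *: h.
have my1 : fmem (B 1%N) y.
  by move=> e he; apply: subB => //; [apply: mx | apply: subZ => //; apply: Bh].
have mh0 : fmem (B 0%N) (fun e => nu (x e) *: h) :=
  @fmemZ _ _ _ _ s0 n0 (fun e => nu (x e)) (fun _ => h) (fmemC s0 n0 (HB0 h)).
have mh1 : fmem (B 1%N) (fun e => nu (x e) *: h) :=
  @fmemZ _ _ _ _ s1 n1 (fun e => nu (x e)) (fun _ => h) (fmemC s1 n1 (Bh h1)).
have sy : fsmall (N 0%N) y := fsmallB s0 n0 mx0 mh0 sx
   (@fsmallZ2 _ _ _ _ s0 n0 (fun e => nu (x e)) (fun _ => h) ssn (fmemC s0 n0 (HB0 h)) (fbndC s0 n0 (HB0 h))).
have [M1 hM1 by1] : fbnd (N 1%N) y := fbndB s1 n1 mx mh1 b1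
   (@fbndZ _ _ _ _ s1 n1 (fun e => nu (x e)) (fun _ => h) sn (fmemC s1 n1 (Bh h1)) (fbndC s1 n1 (Bh h1))).
move=> d hd; have hd2 := hhalf_gt0 hd.
have [c [c0 Hw]] := Hweak (Mdiv hM1 hd2).
have [eta heta bs] := sy _ (Mdiv (ltW c0) hd2).
exists eta => // e he lt; rewrite /S /Sop -/(y e).
apply: le_trans (Hw _ (my1 e he)) _.
rewrite [leRHS]splitr; apply: lerD.
  apply: le_trans (le_mul_div (ltW c0) hd2).
  by apply: ler_wpM2l; [apply: ltW | apply: bs].
apply: le_trans (le_mul_div hM1 hd2); rewrite [leRHS]mulrC.
by apply: ler_wpM2l; [apply: ltW; apply: Mdiv | apply: by1].
Qed.

Lemma fRF m l : (m <= n)%N -> (l <= n.+1 - m)%N ->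
  (forall m', (m' < m)%N -> forall i, (i <= n.+1 - m')%N -> fbnd (N i) (gt m')) ->
  fmem (B l) (fun e => RF m e) /\ fbnd (N l) (fun e => RF m e).
Proof.
move=> mn hl IH.
have hl1 : (l <= n.+1)%N by lia.
have sl := sB hl1; have nl := nB hl1.
have HS : forall j, (1 <= j < m.+1)%N ->
    fmem (B l) (fun e => L j (gt (m - j)%N e)) /\ fbnd (N l) (fun e => L j (gt (m - j)%N e)).
  move=> j hj; have := @fL j (l + j)%N (gt (m - j)%N).
  rewrite addnK; apply; [lia | lia | apply: fmgt; lia | apply: IH; lia].
have mS := fmemSn' sl nl HS; have bS := fbndSn sl nl HS.
have hlm : (l + m <= n.+1)%N by lia.
have [mT bT] : fmem (B l) (fun e => Lt m e (g e)) /\ fbnd (N l) (fun e => Lt m e (g e)).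
  have := @fLt m (l + m)%N g mn.
  by rewrite addnK; apply; [lia | apply: (fbg hlm).1 | apply: (fbg hlm).2].
rewrite /RF; split; first exact: (fmemD sl nl mS mT).
exact: (fbndD sl nl mS mT bS bT).
Qed.

Lemma fTF m l : (m <= n)%N -> (l <= n.+1 - m)%N ->
  (forall m', (m' < m)%N -> forall i, (i <= n.+1 - m')%N -> fbnd (N i) (gt m')) ->
  fmem (B l) (fun e => TF m e) /\ fbnd (N l) (fun e => TF m e).
Proof.
move=> mn hl IH.
have hl1 : (l <= n.+1)%N by lia.
have sl := sB hl1; have nl := nB hl1.
have s0 := sB (leq0n n.+1); have n0 := nB (leq0n n.+1).
have HS : forall j, (1 <= j < m.+1)%N ->
    fmem (B l) (fun e => lk j *: gt (m - j)%N e) /\ fbnd (N l) (fun e => lk j *: gt (m - j)%N e).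
  move=> j hj; have mg : fmem (B l) (gt (m - j)%N) by apply: fmgt; lia.
  split; first exact: (@fmemZ _ _ _ _ sl nl (fun _ => lk j) _ mg).
  apply: (@fbndZ _ _ _ _ sl nl (fun _ => lk j) _ (sbndC _) mg).
  by apply: IH; lia.
have mS := fmemSn' sl nl HS; have bS := fbndSn sl nl HS.
have [mR bR] := fRF mn hl IH.
have [mR0 bR0] := fRF mn (leq0n _) IH.
have [M0 hM0 H0] := Hnub'.
have sn : sbnd (fun e => nu (RF m e)) := sbnd_fun s0 n0 H0 mR0 bR0.
have [mg bg] := fbg hl1.
have mZ := @fmemZ _ _ _ _ sl nl (fun e => nu (RF m e)) _ mg.
have bZ := @fbndZ _ _ _ _ sl nl (fun e => nu (RF m e)) _ sn mg bg.
rewrite /TF; split.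
  exact: (fmemB sl nl (fmemD sl nl mS mZ) mR).
exact: (fbndB sl nl (fmemD sl nl mS mZ) mR (fbndD sl nl mS mZ bS bZ) bR).
Qed.

Lemma bnd_all m : (m <= n)%N -> forall i, (i <= n.+1 - m)%N -> fbnd (N i) (gt m).
Proof.
elim/ltn_ind: m => m IH mn i hi.
have IH' : forall m', (m' < m)%N -> forall i, (i <= n.+1 - m')%N -> fbnd (N i) (gt m').
  by move=> m' hm'; apply: IH => //; lia.
have hk : (1 <= n.+1 - m <= n.+1)%N by lia.
have mT : fmem (B (n.+1 - m)%N) (fun e => TF m e) by move=> e he; apply: BTF.
have [_ b] := fS hk mT (fun l hl => (fTF mn hl IH').2) hi.
have hi1 : (i <= n.+1)%N by lia.
apply: (fbnd_ext (sB hi1) (nB hi1) _ b) => e he.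
by rewrite key.
Qed.

Lemma small_lower k i : (k < n)%N -> (i <= n - k)%N -> fsmall (N i) (gt k).
Proof.
move=> kn hi; have hi1 : (i <= n.+1)%N by lia.
have si := sB hi1; have ni := nB hi1.
have Bg1 : B i (gkk k.+1) by apply: (@Bmono _ (n.+1 - k.+1)%N); [lia | apply: Bgk].
have m1 := fmemC si ni Bg1.
have m2 : fmem (B i) (gt k.+1) by apply: fmgt; lia.
have b2 : fbnd (N i) (gt k.+1) by apply: bnd_all; lia.
have := fsmallE si ni (fmemD si ni m1 m2) (fbndD si ni m1 m2 (fbndC si ni Bg1) b2).
by apply: (fsmall_ext si ni) => e he; rewrite [RHS](gt_rec _ he).
Qed.

Lemma fTF' m l : (m <= n)%N -> (l <= n.+1 - m)%N ->
  fmem (B l) (fun e => TF m e) /\ fbnd (N l) (fun e => TF m e).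
Proof.
move=> mn hl; apply: fTF => // m' hm' i hi; apply: bnd_all => //; lia.
Qed.
Lemma fRF' m l : (m <= n)%N -> (l <= n.+1 - m)%N ->
  fmem (B l) (fun e => RF m e) /\ fbnd (N l) (fun e => RF m e).
Proof.
move=> mn hl; apply: fRF => // m' hm' i hi; apply: bnd_all => //; lia.
Qed.

Lemma small_top : fsmall (N 0%N) (gt n).
Proof.
have s0 := sB (leq0n n.+1); have n0 := nB (leq0n n.+1).
have hn : (n <= n)%N by [].
have h0 : (0 <= n.+1 - n)%N by [].
have h1 : (1 <= n.+1 - n)%N by lia.
have [mR0 bR0] := fRF' hn h0.
have [M0 hM0 H0] := Hnub'.
have HS : forall j, (1 <= j < n.+1)%N ->
    fmem (B 0%N) (fun e => L j (gt (n - j)%N e)) /\ fsmall (N 0%N) (fun e => L j (gt (n - j)%N e)).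
  move=> j hj; split; first by move=> e he; apply: HB0.
  have := @fLs j j (gt (n - j)%N).
  rewrite subnn; apply; [lia | lia | apply: fmgt; lia | apply: small_lower; lia].
have mS : fmem (B 0%N) (fun e => \sum_(1 <= j < n.+1) L j (gt (n - j)%N e)).
  by move=> e he; apply: HB0.
have sS := fsmallSn s0 n0 HS.
have mT : fmem (B 0%N) (fun e => Lt n e (g e)) by move=> e he; apply: HB0.
have sT : fsmall (N 0%N) (fun e => Lt n e (g e)).
  have := @fLtc n n g; rewrite subnn; apply; first by rewrite leqnn.
    exact: (fbg (leqnn _)).1.
  exact: (fbg (leqnn _)).2.
have sR : fsmall (N 0%N) (fun e => RF n e) by rewrite /RF; apply: (fsmallD s0 n0 mS mT sS sT).
have HS2 : forall j, (1 <= j < n.+1)%N ->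
    fmem (B 0%N) (fun e => lk j *: gt (n - j)%N e) /\ fsmall (N 0%N) (fun e => lk j *: gt (n - j)%N e).
  move=> j hj; split; first by move=> e he; apply: HB0.
  apply: (@fsmallZ _ _ _ _ s0 n0 (fun _ => lk j) _ (sbndC _)); first by move=> e he; apply: HB0.
  by apply: small_lower; lia.
have sS2 := fsmallSn s0 n0 HS2.
have [mg bg] := fbg (leq0n n.+1).
have ssn : ssmall (fun e => nu (RF n e)) := ssmall_fun s0 n0 H0 mR0 sR.
have sZ := @fsmallZ2 _ _ _ _ s0 n0 (fun e => nu (RF n e)) _ ssn mg bg.
have m0 : forall x : K -> V, fmem (B 0%N) x by move=> x e he; apply: HB0.
have sTF : fsmall (N 0%N) (fun e => TF n e).
  rewrite /TF; apply: (fsmallB s0 n0 (m0 _) mR0) => //.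
  exact: (fsmallD s0 n0 (m0 _) (m0 _) sS2 sZ).
have mT1 : fmem (B 1%N) (fun e => TF n e) by move=> e he; have := BTF he hn; rewrite subSnn.
have := fSsmall mT1 sTF (fTF' hn h0).2 (fTF' hn h1).2.
by apply: (fsmall_ext s0 n0) => e he; rewrite key.
Qed.

Theorem main_sec :
  [/\ (forall delta : K, 0 < delta -> exists eta : K, 0 < eta /\
         forall eps, in01 eps -> eps < eta -> N 0%N (gt n eps) <= delta),
      (forall k i, (k + i <= n)%N ->
         forall delta : K, 0 < delta -> exists eta : K, 0 < eta /\
           forall eps, in01 eps -> eps < eta -> N i (gt k eps) <= delta) &
      (forall k, (k <= n)%N -> exists M : K, forall eps, in01 eps ->
         B (n.+1 - k)%N (gt k eps) /\ N (n.+1 - k)%N (gt k eps) <= M)].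
Proof.
split.
- by move=> d hd; have [eta he H] := small_top hd; exists eta.
- move=> k i hki d hd.
  have [kn|kn] := ltnP k n.
    have hi : (i <= n - k)%N by lia.
    by have [eta he H] := small_lower kn hi hd; exists eta.
  have -> : k = n by lia.
  have -> : i = 0%N by lia.
  by have [eta he H] := small_top hd; exists eta.
- move=> k kn; have [M hM H] := bnd_all kn (leqnn _).
  by exists M => e he; split; [apply: Bgt | apply: H].
Qed.

End Main.

Theorem all_K (K : numFieldType) : theorem6_for K.
Proof.
rewrite /theorem6_for; intros.
by apply: main_sec; eassumption.
Qed.

Theorem mainTheorem6 : theorem6_for R /\ theorem6_for R[i].
Proof. by split; apply: all_K. Qed.
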